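(* In the setting described in the context, the function $\mathcal{V}$ is continuous on $\mathcal{K}_{\mathcal{D}_{\mathcal{A}}}(\mathbb{R}^n):=\{X\in\mathcal{K}(\mathbb{R}^n): X\cap\mathcal{D}_{\mathcal{A}}\neq\emptyset\}$ with respect to the Hausdorff distance.
   Context: Let $\|\cdot\|$ be a norm on $\mathbb{R}^n$ and $\mathrm{dist}(x,\Omega):=\inf_{y\in\Omega}\|x-y\|$. Let $\mathcal{K}(\mathbb{R}^n)$ denote the nonempty compact subsets of $\mathbb{R}^n$, equipped with the Hausdorff distance $d_H(X,Y):=\max\{\sup_{x\in X}\mathrm{dist}(x,Y),\sup_{y\in Y}\mathrm{dist}(y,X)\}$. Consider $x_{k+1}=f(x_k,u_k)$ with $f:\mathbb{R}^n\times\mathbb{R}^m\to\mathbb{R}^n$ continuous and inputs $u_k\in U$, $U\subset\mathbb{R}^m$ nonempty compact. For $x\in\mathbb{R}^n$ and $\pi:\mathbb{Z}_+\to U$, $\varphi_x^\pi(0)=x$, $\varphi_x^\pi(k+1)=f(\varphi_x^\pi(k),\pi(k))$; $\mathcal{R}(X,k):=\{\varphi_x^\pi(k):x\in X,\pi\in U^{\mathbb{Z}_+}\}$. Let $\mathcal{A}\in\mathcal{K}(\mathbb{R}^n)$ be controlled invariant (every $x\in\mathcal{A}$ admits $u\in U$ with $f(x,u)\in\mathcal{A}$). Assume local $\ell_p$-stabilizability: there exist $r>0$, $M\ge1$, $p>0$, $\lambda:[0,r]\times\mathbb{Z}_+\to\mathbb{R}_+$ such that (1) for each $k$, $s\mapsto\lambda(s,k)$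 is continuous, nondecreasing, $\lambda(0,k)=0$; for each $s$, $k\mapsto\lambda(s,k)$ is nonincreasing, $\lambda(s,0)\le s$; (2) $\sum_{k}\lambda(r,k)^p<\infty$; (3) for every $x$ with $\mathrm{dist}(x,\mathcal{A})\le r$ there is $\pi\in U^{\mathbb{Z}_+}$ with $\mathrm{dist}(\varphi_x^\pi(k),\mathcal{A})\le M\lambda(\mathrm{dist}(x,\mathcal{A}),k)$ for all $k$. Let $\mathcal{D}_{\mathcal{A}}:=\{x:\exists\pi\in U^{\mathbb{Z}_+},\ \lim_{k\to\infty}\mathrm{dist}(\varphi_x^\pi(k),\mathcal{A})=0\}$. Let $\alpha:\mathbb{R}^n\to\mathbb{R}_+$ be continuous with $\underline{\alpha}\,\mathrm{dist}(x,\mathcal{A})^{\bar p}\le\alpha(x)\le\overline{\alpha}\,\mathrm{dist}(x,\mathcal{A})^{\bar p}$, constants $\underline{\alpha},\overline{\alpha}>0$, $\bar p\ge p$. Define $\Psi(X):=\inf_{y\in X}\alpha(y)$ and $\mathcal{V}(X):=\sum_{k=0}^\infty\Psi(\mathcal{R}(X,k))\in[0,\infty]$. *)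

(* Defs.v *)
(* States live in 'rV[R]_n, inputs in 'rV[R]_m,
   carrying the standard (product/sup-norm) topology used for continuity and
   compactness (all norms on R^n are equivalent); distances are measured with an
   arbitrary norm [nrm] on R^n, as in the paper. *)
From HB Require Import structures.
From mathcomp Require Import all_boot all_order all_algebra.
From mathcomp Require Import all_classical all_reals all_analysis.
Set Implicit Arguments. Unset Strict Implicit. Unset Printing Implicit Defensive.
Import Order.TTheory GRing.Theory Num.Theory.
Import numFieldNormedType.Exports.
Local Open Scope classical_set_scope.
Local Open Scope ring_scope.

Section Defs.
Variables (R : realType) (n m : nat).
Notation X := 'rV[R]_n.
Notation Uty := 'rV[R]_m.

Definition is_norm (nrm : X -> R) : Prop :=
  [/\ forall x, nrm x = 0 -> x = 0,
      forall (a : R) x, nrm (a *: x) = `|a| * nrm x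
    & forall x y, nrm (x + y) <= nrm x + nrm y].

Definition distS (nrm : X -> R) (x : X) (Om : set X) : R :=
  inf [set nrm (x - y) | y in Om].

Definition dH (nrm : X -> R) (A B : set X) : R :=
  Num.max (sup [set distS nrm x B | x in A]) (sup [set distS nrm y A | y in B]).

Fixpoint traj (f : X -> Uty -> X) (x : X) (pi : nat -> Uty) (k : nat) : X :=
  if k is k'.+1 then f (traj f x pi k') (pi k') else x.

Definition inputs (U : set Uty) : set (nat -> Uty) := [set pi | forall k, U (pi k)].

Definition reach (f : X -> Uty -> X) (U : set Uty) (S : set X) (k : nat) : set X :=
  [set z | exists x, exists pi, [/\ S x, inputs U pi & z = traj f x pi k]].

Definition ctrl_invariant (f : X -> Uty -> X) (U : set Uty) (A : set X) : Prop :=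
  forall x, A x -> exists u, U u /\ A (f x u).

Definition DA (nrm : X -> R) (f : X -> Uty -> X) (U : set Uty) (A : set X) : set X :=
  [set x | exists pi, inputs U pi /\
     (fun k => distS nrm (traj f x pi k) A) @ \oo --> (0 : R)].

Definition lp_stabilizable (nrm : X -> R) (f : X -> Uty -> X) (U : set Uty)
  (A : set X) (r M p : R) (lam : R -> nat -> R) : Prop :=
  [/\ 0 < r, 1 <= M & 0 < p] /\
      (forall k,
         {within `[0, r], continuous (fun s => lam s k)} /\
         (forall s t, s \in `[0, r] -> t \in `[0, r] -> s <= t -> lam s k <= lam t k) /\
         lam 0 k = 0) /\
      (forall s, s \in `[0, r] ->
          (forall k l : nat, (k <= l)%N -> lam s l <= lam s k) /\
          lam s 0 <= s /\
          (forall k, 0 <= lam s k)) /\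
      (\sum_(0 <= k <oo) ((lam r k `^ p)%:E) < +oo)%E /\
      (forall x, distS nrm x A <= r ->
        exists pi, inputs U pi /\
          forall k, distS nrm (traj f x pi k) A <= M * lam (distS nrm x A) k).

Definition Psi (alpha : X -> R) (S : set X) : R := inf [set alpha y | y in S].

Definition Vfun (alpha : X -> R) (f : X -> Uty -> X) (U : set Uty) (S : set X)
  : \bar R :=
  (\sum_(0 <= k <oo) ((Psi alpha (reach f U S k))%:E))%E.

Definition KD (D : set X) : set (set X) :=
  [set S | compact S /\ S !=set0 /\ (S `&` D) !=set0].

End Defs.

(* Main.v *)
Require Import Defs.
From HB Require Import structures.
From mathcomp Require Import all_boot all_order all_algebra.
From mathcomp Require Import all_classical all_reals all_analysis.
From mathcomp Require Import lra.
Import Order.TTheory GRing.Theory Num.Theory.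
Import numFieldNormedType.Exports.
Local Open Scope classical_set_scope.
Local Open Scope ring_scope.
HB.saturate prod.
Section NormFacts.
Context (R : realType) (n : nat) (nrm : 'rV[R]_n -> R) (Hn : is_norm nrm).

Lemma nrm0 : nrm 0 = 0.
Proof. case: Hn => _ hZ _. by rewrite -(scale0r (0 : 'rV[R]_n)) hZ normr0 mul0r. Qed.

Lemma nrmN x : nrm (- x) = nrm x.
Proof. case: Hn => _ hZ _. by rewrite -scaleN1r hZ normrN normr1 mul1r. Qed.

Lemma nrm_ge0 x : 0 <= nrm x.
Proof.
case: Hn => _ _ hT. have := hT x (- x). rewrite subrr nrm0 nrmN => h.
by rewrite -(@pmulr_rge0 _ 2) // mulr2n mulrDl mul1r.
Qed.

Lemma nrmB x y : nrm (x - y) = nrm (y - x).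
Proof. by rewrite -nrmN opprB. Qed.

Lemma nrm_tri x y z : nrm (x - z) <= nrm (x - y) + nrm (y - z).
Proof. case: Hn => _ _ hT. have := hT (x - y) (y - z). by rewrite addrA subrK. Qed.

Lemma nrm_sum {I : Type} (s : seq I) (F : I -> 'rV[R]_n) :
  nrm (\sum_(i <- s) F i) <= \sum_(i <- s) nrm (F i).
Proof.
case: Hn => _ _ hT. elim: s => [|a s IH]; first by rewrite !big_nil nrm0.
rewrite !big_cons. apply: le_trans (hT _ _) _. by rewrite lerD2l.
Qed.

Lemma nrm_upper : exists2 C : R, 0 < C & forall x, nrm x <= C * `|x|.
Proof.
case: Hn => _ hZ _.
exists (1 + \sum_(j < n) nrm ('e_j : 'rV[R]_n)).
  by rewrite ltr_pwDl // sumr_ge0 // => j _; exact: nrm_ge0.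
move=> x. rewrite {1}(row_sum_delta x).
apply: le_trans (nrm_sum _ _) _.
under eq_bigr => j _ do rewrite hZ.
rewrite mulrDl mul1r. apply: ler_wpDl; first exact: normr_ge0.
rewrite mulr_suml. apply: ler_sum => j _. rewrite mulrC. apply: ler_wpM2l; first exact: nrm_ge0.
change (`|x 0 j| <= mx_norm x). rewrite mx_normrE.
exact: (le_bigmax _ (fun ij : 'I_1 * 'I_n => `|x ij.1 ij.2|) (ord0, j)).
Qed.

Lemma nrm_lip x y : `|nrm x - nrm y| <= nrm (x - y).
Proof.
case: Hn => _ _ hT. rewrite ler_norml.
have := hT (y - x) x. have := hT (x - y) y. rewrite !subrK (nrmB y x).
move=> h1 h2. apply/andP; split; lra.
Qed.

Lemma nrm_cont : continuous nrm.
Proof.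
have [C C0 hC] := nrm_upper.
move=> x A /nbhs_ballP [e e0 hA].
apply/nbhs_ballP; exists (e / C); first by rewrite /= divr_gt0.
move=> y; rewrite -ball_normE /= => hy. apply: hA. rewrite -ball_normE /=.
apply: le_lt_trans (nrm_lip _ _) _. apply: le_lt_trans (hC _) _.
by rewrite -ltr_pdivlMl // mulrC.
Qed.

Lemma nrm_lower : exists2 c : R, 0 < c & forall x, c * `|x| <= nrm x.
Proof.
case: Hn => h0 hZ _.
pose S := [set x : 'rV[R]_n | `|x| = 1].
have cS : compact S.
  apply: bounded_closed_compact.
    exists 1; split => // M hM x Sx. by rewrite /= Sx ltW.
  have -> : S = (fun x : 'rV[R]_n => `|x|) @^-1` [set 1] by [].
  apply: preimage_closed; last exact: closed_eq.
  move=> x _; exact: norm_continuous.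
have cK : compact (nrm @` S).
  apply: continuous_compact => //. exact: continuous_subspaceT nrm_cont.
have clK : closed (nrm @` S) by apply: compact_closed => //; exact: norm_hausdorff.
have oK : open (~` (nrm @` S)) by exact: closed_openC.
have K0 : (~` (nrm @` S)) 0.
  move=> [x Sx hx]. have x0 := h0 _ hx. by move: Sx; rewrite /S /= x0 normr0; move/eqP; rewrite eq_sym oner_eq0.
have : nbhs (0 : R) (~` (nrm @` S)) by apply: open_nbhs_nbhs; split.
move=> /nbhs_ballP [c c0 hc]. exists c => // x.
have [->|xn0] := eqVneq x 0; first by rewrite normr0 mulr0 nrm0.
have nx0 : 0 < `|x| by rewrite normr_gt0.
have hS : S (`|x|^-1 *: x) by rewrite /S /= normrZ normfV normr_id mulVf // gt_eqF.
have : ~ ball (0 : R) c (nrm (`|x|^-1 *: x)) by move=> /hc; apply; exists (`|x|^-1 *: x).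
rewrite -ball_normE /= sub0r normrN hZ normfV normr_id ger0_norm; last first.
  by rewrite mulr_ge0 ?nrm_ge0 // invr_ge0 ltW.
move/negP; rewrite -leNgt => h.
by rewrite -ler_pdivlMr // mulrC.
Qed.

End NormFacts.
Section Unif.
Context (R : realType).

Lemma bigmin_pos {I : Type} (s : seq I) (F : I -> R) :
  (forall i, 0 < F i) -> 0 < \big[Num.min/1]_(i <- s) F i.
Proof.
move=> hF; elim: s => [|a s IH]; first by rewrite big_nil.
by rewrite big_cons lt_min hF IH.
Qed.

Lemma bigmin_le {I : eqType} (s : seq I) (F : I -> R) i :
  i \in s -> \big[Num.min/1]_(j <- s) F j <= F i.
Proof.
elim: s => [//|a s IH]; rewrite in_cons big_cons => /orP [/eqP ->|/IH h].
  by rewrite ge_min lexx.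
by rewrite ge_min h orbT.
Qed.

Lemma unif_cont {T : pseudoMetricType R} {V : pseudoMetricType R} (K : set T) (g : T -> V) :
  cover_compact K -> (forall x, K x -> {for x, continuous g}) ->
  forall e, 0 < e -> exists2 d, 0 < d &
    forall x y, K x -> ball x d y -> ball (g x) e (g y).
Proof.
move=> cK gc e e0.
have e2 : 0 < e / 2 by rewrite divr_gt0.
have : forall x, exists d : R, 0 < d /\
    (K x -> forall y, ball x d y -> ball (g x) (e / 2) (g y)).
  move=> x. have [Kx|nKx] := pselect (K x); last by exists 1; split.
  have := gc x Kx _ (nbhsx_ballx (g x) _ e2).
  move=> /nbhs_ballP [d d0 hd]. by exists d; split => // _ y /hd.
move=> /choice [dd hdd].
have [] := cK T K (fun x => interior (ball x (dd x / 2))).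
- move=> i _; exact: open_interior.
- move=> x Kx. exists x => //. apply: nbhsx_ballx. by rewrite divr_gt0 // (hdd x).1.
move=> D' D'K hcov.
exists (\big[Num.min/1]_(i <- finmap.enum_fset D') (dd i / 2)).
  apply: bigmin_pos => i. by rewrite divr_gt0 // (hdd i).1.
move=> x y Kx hxy.
have [i Di hi] := hcov x Kx.
have Ki : K i by move: (D'K i Di); rewrite inE.
have hix : ball i (dd i / 2) x by apply: interior_subset.
have hmin : \big[Num.min/1]_(j <- finmap.enum_fset D') (dd j / 2) <= dd i / 2 by apply: bigmin_le.
have hiy : ball i (dd i) y.
  have := ball_triangle hix hxy. apply: le_ball.
  have := (hdd i).1. lra.
have hix' : ball i (dd i) x.
  move: hix; apply: le_ball. have := (hdd i).1. lra.
have h1 := (hdd i).2 Ki _ hix'.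
have h2 := (hdd i).2 Ki _ hiy.
have := ball_triangle (ball_sym h1) h2. by rewrite -splitr.
Qed.

End Unif.

Section Traj.
Context (R : realType) (n m : nat) (f : 'rV[R]_n -> 'rV[R]_m -> 'rV[R]_n) (U : set 'rV[R]_m).
Hypothesis fc : continuous (fun xu : 'rV[R]_n * 'rV[R]_m => f xu.1 xu.2).
Hypothesis cU : compact U.

Lemma traj_prefix x (pi pi' : nat -> 'rV[R]_m) k :
  (forall j, (j < k)%N -> pi j = pi' j) -> traj f x pi k = traj f x pi' k.
Proof.
elim: k => [//|k IH] h /=. rewrite IH; last by move=> j jk; apply: h; exact: ltnW.
by rewrite h.
Qed.

Definition cat_in (K : nat) (pi pi' : nat -> 'rV[R]_m) : nat -> 'rV[R]_m :=
  fun j => if (j < K)%N then pi j else pi' (j - K)%N.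

Lemma cat_inputs K pi pi' : inputs U pi -> inputs U pi' -> inputs U (cat_in K pi pi').
Proof. move=> h h' j; rewrite /cat_in; case: ifP => _; [exact: h | exact: h']. Qed.

Lemma traj_cat x K pi pi' j :
  traj f x (cat_in K pi pi') (K + j) = traj f (traj f x pi K) pi' j.
Proof.
elim: j => [|j IH].
  rewrite addn0; apply: traj_prefix => i iK; by rewrite /cat_in iK.
rewrite addnS /= IH /cat_in ltnNge leq_addr /=. by rewrite addKn.
Qed.

Lemma reach_succ S k :
  reach f U S k.+1 = (fun z => f z.1 z.2) @` (reach f U S k `*` U).
Proof.
apply/seteqP; split => z.
  move=> [x [pi [Sx hpi ->]]]. exists (traj f x pi k, pi k) => //. split => //=.
  by exists x, pi.
move=> [[z1 u] [[x [pi [Sx hpi ->]]] /= Uu] <-] /=.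
exists x, (fun j => if j == k then u else pi j). split => //.
  move=> j; case: ifP => _ //.
rewrite /= eqxx. congr f. apply: traj_prefix => j jk. by rewrite (ltn_eqF jk).
Qed.

Hypothesis U0 : U !=set0.

Lemma reach0 S : reach f U S 0 = S.
Proof.
apply/seteqP; split => z; first by move=> [x [pi [Sx _ ->]]].
move=> Sz. have [u Uu] := U0. exists z, (fun=> u); split => //.
Qed.

Lemma reach_compact S k : compact S -> compact (reach f U S k).
Proof.
move=> cS; elim: k => [|k IH]; first by rewrite reach0.
rewrite reach_succ. apply: continuous_compact; last exact: compact_setX.
exact: continuous_subspaceT.
Qed.

Lemma traj_unif S k : compact S -> forall e, 0 < e -> exists2 d, 0 < d &
  forall x y pi, S x -> inputs U pi -> ball x d y -> ball (traj f x pi k) e (traj f y pi k).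
Proof.
move=> cS; elim: k => [|k IH] e e0.
  by exists e => // x y pi _ _.
have cK := compact_setX (reach_compact S k cS) cU.
rewrite compact_cover in cK.
have [eta eta0 heta] := @unif_cont R _ _ _ _ cK (fun z _ => fc z) _ e0.
have [d d0 hd] := IH eta eta0.
exists d => // x y pi Sx hpi hxy /=.
have := heta (traj f x pi k, pi k) (traj f y pi k, pi k). apply.
  split => //=. by exists x, pi.
split => /=; first exact: hd. exact: ballxx.
Qed.
End Traj.

Section Dist.
Context (R : realType) (n : nat) (nrm : 'rV[R]_n -> R) (Hn : is_norm nrm).

Lemma distS_ge0 x (Om : set 'rV[R]_n) : Om !=set0 -> 0 <= distS nrm x Om.
Proof.
move=> [y Oy]; apply: lb_le_inf; first by exists (nrm (x - y)), y.
move=> _ [z _ <-]; exact: nrm_ge0.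
Qed.

Lemma distS_le {x y : 'rV[R]_n} {Om : set 'rV[R]_n} : Om y -> distS nrm x Om <= nrm (x - y).
Proof.
move=> Oy; apply: ge_inf; last by exists y.
exists 0 => _ [z _ <-]; exact: nrm_ge0.
Qed.

Lemma distS_lt x (Om : set 'rV[R]_n) d : Om !=set0 -> distS nrm x Om < d ->
  exists y, Om y /\ nrm (x - y) < d.
Proof.
move=> [y0 Oy0] /inf_lt [].
  by exists (nrm (x - y0)), y0.
by move=> _ [y Oy <-] h; exists y.
Qed.

Lemma distS_tri x z (Om : set 'rV[R]_n) : Om !=set0 ->
  distS nrm x Om <= distS nrm z Om + nrm (x - z).
Proof.
move=> [y0 Oy0]. rewrite -lerBlDr. apply: lb_le_inf; first by exists (nrm (z - y0)), y0.
move=> _ [y Oy <-]. rewrite lerBlDr addrC. apply: le_trans (distS_le Oy) _.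
exact: nrm_tri.
Qed.

Lemma compact_normbound (S : set 'rV[R]_n) : compact S ->
  exists M : R, forall x, S x -> `|x| <= M.
Proof.
move=> /compact_bounded. rewrite /bounded_near => -[M [_ hM]].
exists (M + 1) => x Sx. have := hM (M + 1). rewrite ltrDl ltr01. by move=> /(_ isT x Sx).
Qed.

Lemma dH_lt (X Y : set 'rV[R]_n) d : compact X -> X !=set0 -> compact Y -> Y !=set0 ->
  dH nrm X Y < d ->
  (forall x, X x -> exists y, Y y /\ nrm (x - y) < d) /\
  (forall y, Y y -> exists x, X x /\ nrm (y - x) < d).
Proof.
move=> cX X0 cY Y0 hd.
have [C C0 hC] := @nrm_upper R n nrm Hn.
have [MX hMX] := compact_normbound _ cX.
have [MY hMY] := compact_normbound _ cY.
have [x0 Xx0] := X0. have [y0 Yy0] := Y0.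
split.
- move=> x Xx. apply: distS_lt => //.
  apply: le_lt_trans hd. rewrite /dH.
  apply: (@le_trans _ _ (sup [set distS nrm x1 Y | x1 in X])); last by rewrite le_max lexx.
  apply: ub_le_sup; last by exists x.
  exists (C * (MX + `|y0|)) => _ [x' Xx' <-].
  apply: le_trans (distS_le Yy0) _. apply: le_trans (hC _) _.
  rewrite ler_pM2l //. apply: le_trans (ler_normB _ _) _. by rewrite lerD2r hMX.
- move=> y Yy. apply: distS_lt => //.
  apply: le_lt_trans hd. rewrite /dH.
  apply: (@le_trans _ _ (sup [set distS nrm y1 X | y1 in Y])); last by rewrite le_max lexx orbT.
  apply: ub_le_sup; last by exists y.
  exists (C * (MY + `|x0|)) => _ [y' Yy' <-].
  apply: le_trans (distS_le Xx0) _. apply: le_trans (hC _) _.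
  rewrite ler_pM2l //. apply: le_trans (ler_normB _ _) _. by rewrite lerD2r hMY.
Qed.

End Dist.

Section Series.
Context (R : realType).
Local Open Scope ereal_scope.

Lemma series_bounds (a : nat -> R) (K : nat) (B : R) :
  (forall k, (0 <= a k)%R) -> (forall L, (\sum_(K <= k < L) a k <= B)%R) ->
  exists v : R, \sum_(0 <= k <oo) (a k)%:E = v%:E /\
    (\sum_(0 <= k < K) a k <= v)%R /\ (v <= \sum_(0 <= k < K) a k + B)%R.
Proof.
move=> a0 hB.
have B0 : (0 <= B)%R by have := hB K; rewrite big_geq.
have lo : (\sum_(0 <= k < K) a k)%:E <= \sum_(0 <= k <oo) (a k)%:E.
  rewrite -sumEFin. apply: nneseries_lim_ge => k _ _; by rewrite lee_fin.
have up : \sum_(0 <= k <oo) (a k)%:E <= (\sum_(0 <= k < K) a k + B)%:E.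
  apply: lime_le; first by apply: is_cvg_nneseries => k _ _; rewrite lee_fin.
  apply: nearW => L. rewrite sumEFin lee_fin.
  have [LK|KL] := leqP L K.
    rewrite (@big_cat_nat _ _ _ L 0 K) //=. rewrite -addrA lerDl.
    apply: addr_ge0 => //. by apply: sumr_ge0 => i _.
  rewrite (@big_cat_nat _ _ _ K 0 L) //=; last exact: ltnW. by rewrite lerD2l.
have s0 : 0 <= \sum_(0 <= k <oo) (a k)%:E.
  apply: le_trans lo. rewrite lee_fin. by apply: sumr_ge0 => i _.
have fin : \sum_(0 <= k <oo) (a k)%:E \is a fin_num.
  by rewrite ge0_fin_numE // (le_lt_trans up) // ltry.
exists (fine (\sum_(0 <= k <oo) (a k)%:E)). rewrite fineK //. split => //.
split; rewrite -lee_fin fineK //.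
Qed.

Lemma lam_tail (w : nat -> R) (p pbar : R) :
  (forall j, (0 <= w j)%R) -> (0 < p)%R -> (p <= pbar)%R ->
  \sum_(0 <= k <oo) ((w k `^ p)%:E) < +oo ->
  forall e, (0 < e)%R -> exists J, forall L, (\sum_(J <= j < L) w j `^ pbar <= e)%R.
Proof.
move=> w0 p0 ppb hfin e e0.
pose u j := (w j `^ p)%R.
have u0 j : (0 <= u j)%R by exact: powR_ge0.
have s0 : 0 <= \sum_(0 <= k <oo) (u k)%:E.
  by apply: nneseries_ge0 => k _ _; rewrite lee_fin.
have fin : \sum_(0 <= k <oo) (u k)%:E \is a fin_num by rewrite ge0_fin_numE.
set s := fine (\sum_(0 <= k <oo) (u k)%:E).
have sE : \sum_(0 <= k <oo) (u k)%:E = s%:E by rewrite fineK.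
have ps_le L : (\sum_(0 <= k < L) u k <= s)%R.
  rewrite -lee_fin -sE -sumEFin. apply: nneseries_lim_ge => k _ _; by rewrite lee_fin.
pose e' := Num.min e 1%R.
have e'0 : (0 < e')%R by rewrite lt_min e0 ltr01.
have : (s - e')%:E < \sum_(0 <= k <oo) (u k)%:E by rewrite sE lte_fin ltrBlDr ltrDl.
have -> : \sum_(0 <= k <oo) (u k)%:E =
    ereal_sup (range (fun L => \sum_(0 <= k < L) (u k)%:E)).
  apply: cvg_lim => //. apply: ereal_nondecreasing_cvgn.
  apply: ereal_nondecreasing_series => k _ _; by rewrite lee_fin.
move=> /ereal_sup_gt [_ [J _ <-]]. rewrite sumEFin lte_fin => hJ.
have tail L : (\sum_(J <= j < L) u j <= e')%R.
  have [LJ|JL] := leqP L J; first by rewrite big_geq // ltW.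
  have := ps_le L. rewrite (@big_cat_nat _ _ _ J 0 L) //=; last exact: ltnW.
  move: hJ. set a1 := (\sum_(0 <= i < J) u i)%R. set a2 := (\sum_(J <= i < L) u i)%R.
  move=> h1 h2. lra.
exists J => L.
have tl : (\sum_(J <= j < L) u j <= e)%R.
  by apply: le_trans (tail L) _; rewrite ge_min lexx.
apply: le_trans tl. apply: ler_sum_nat => j /andP [Jj _].
have uj1 : (u j <= 1)%R.
  apply: (@le_trans _ _ e'); last by rewrite ge_min lexx orbT.
  apply: le_trans (tail j.+1). rewrite big_nat_recr //=. rewrite lerDr.
  by apply: sumr_ge0 => i _.
have wj1 : (w j <= 1)%R.
  rewrite leNgt; apply/negP => hw.
  have h : (1 `^ p < w j `^ p)%R.
    by apply: (gt0_ltr_powR p0) => //; rewrite nnegrE ?w0.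
  move: h; rewrite powR1 => h. move: uj1; rewrite leNgt. by rewrite /u h.
have [->|wj0] := eqVneq (w j) 0%R.
  by rewrite !powR0 // gt_eqF // (lt_le_trans p0).
apply: ger_powR => //. by rewrite lt_neqAle eq_sym wj0 w0.
Qed.

End Series.

Section Main.
Context (R : realType) (n m : nat) (nrm : 'rV[R]_n -> R)
  (f : 'rV[R]_n -> 'rV[R]_m -> 'rV[R]_n) (U : set 'rV[R]_m) (A : set 'rV[R]_n)
  (alpha : 'rV[R]_n -> R).
Hypothesis Hn : is_norm nrm.
Hypothesis fc : continuous (fun xu : 'rV[R]_n * 'rV[R]_m => f xu.1 xu.2).
Hypothesis cU : compact U.
Hypothesis U0 : U !=set0.
Hypothesis ac : continuous alpha.
Hypothesis a0 : forall x, 0 <= alpha x.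

Local Notation P k S := (Psi alpha (reach f U S k)).

Lemma reach_ne {S} k : S !=set0 -> reach f U S k !=set0.
Proof.
move=> [x Sx]; have [u Uu] := U0. exists (traj f x (fun=> u) k), x, (fun=> u). by split.
Qed.

Lemma Psi_le {S k z} : reach f U S k z -> P k S <= alpha z.
Proof.
move=> hz; apply: ge_inf; last by exists z.
exists 0 => _ [y _ <-]; exact: a0.
Qed.

Lemma Psi_lb S k c : S !=set0 -> (forall z, reach f U S k z -> c <= alpha z) -> c <= P k S.
Proof.
move=> /(reach_ne k) [z hz] h; apply: lb_le_inf; first by exists (alpha z), z.
move=> _ [y hy <-]; exact: h.
Qed.

Lemma Psi_ge0 S k : S !=set0 -> 0 <= P k S.
Proof. move=> S0; apply: Psi_lb => // z _; exact: a0. Qed.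

Lemma nrm_ball : exists2 c : R, 0 < c & forall x y d, nrm (x - y) < c * d -> ball x d y.
Proof.
have [c c0 hc] := @nrm_lower R n nrm Hn.
exists c => // x y d h. rewrite -ball_normE /=.
have := hc (x - y). move=> h2. have := le_lt_trans h2 h. by rewrite ltr_pM2l.
Qed.

Lemma Psi_cont X k e : compact X -> X !=set0 -> 0 < e -> exists2 delta, 0 < delta &
  forall Y, compact Y -> Y !=set0 -> dH nrm X Y < delta ->
    P k Y <= P k X + e /\ P k X <= P k Y + e.
Proof.
move=> cX X0 e0.
have [c c0 hc] := nrm_ball.
have e2 : 0 < e / 2 by rewrite divr_gt0.
have : exists2 a, [set alpha y | y in reach f U X k] a & a < P k X + e / 2.
  apply: inf_lt; last by rewrite ltrDl.
  have [z hz] := reach_ne k X0. by exists (alpha z), z.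
move=> [_ [z [x [pi [Xx hpi ->]]]] <-] hz.
have := ac (traj f x pi k) _ (nbhsx_ballx (alpha (traj f x pi k)) _ e2).
move=> /nbhs_ballP [eta eta0 heta].
have [d1 d10 hd1] := @traj_unif R n m f U fc cU U0 [set x] k (@compact_set1 _ x) eta eta0.
have crX := @reach_compact R n m f U fc cU U0 X k cX.
rewrite compact_cover in crX.
have [eta2 eta20 heta2] := @unif_cont R _ _ _ alpha crX (fun z _ => ac z) e e0.
have [d2 d20 hd2] := @traj_unif R n m f U fc cU U0 X k cX eta2 eta20.
exists (Num.min (c * d1) (c * d2)); first by rewrite lt_min !mulr_gt0.
move=> Y cY Y0 hXY.
have [hXY1 hXY2] := @dH_lt R n nrm Hn X Y _ cX X0 cY Y0 hXY.
split.
- have [y [Yy hy]] := hXY1 x Xx.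
  have bxy : ball x d1 y by apply: hc; apply: lt_le_trans hy _; rewrite ge_min lexx.
  have := heta _ (hd1 x y pi erefl hpi bxy). rewrite -ball_normE /= => h.
  have hr : reach f U Y k (traj f y pi k) by exists y, pi.
  apply: le_trans (Psi_le hr) _.
  move: h hz; rewrite ltr_norml. move=> /andP [h1 h2] h3. lra.
- rewrite -lerBlDr. apply: Psi_lb => // _ [y [pi' [Yy hpi' ->]]].
  have [x' [Xx' hx']] := hXY2 y Yy.
  have bxy : ball x' d2 y.
    apply: hc; rewrite (@nrmB R n nrm Hn); apply: lt_le_trans hx' _; by rewrite ge_min lexx orbT.
  have hr : reach f U X k (traj f x' pi' k) by exists x', pi'.
  have := heta2 (traj f x' pi' k) (traj f y pi' k) hr (hd2 x' y pi' Xx' hpi' bxy).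
  rewrite -ball_normE /= => h. move: h; rewrite ltr_norml => /andP [h1 h2].
  have h4 := Psi_le hr.
  lra.
Qed.


Lemma Psi_cont_all X K e : compact X -> X !=set0 -> 0 < e -> exists2 delta, 0 < delta &
  forall Y, compact Y -> Y !=set0 -> dH nrm X Y < delta ->
    forall k, (k < K)%N -> P k Y <= P k X + e /\ P k X <= P k Y + e.
Proof.
move=> cX X0 e0; elim: K => [|K [d1 d10 h1]]; first by exists 1.
have [d2 d20 h2] := Psi_cont X K e cX X0 e0.
exists (Num.min d1 d2); first by rewrite lt_min d10 d20.
move=> Y cY Y0 hXY k; rewrite ltnS leq_eqVlt => /orP [/eqP ->|kK].
  by apply: h2 => //; apply: lt_le_trans hXY _; rewrite ge_min lexx orbT.
by apply: h1 => //; apply: lt_le_trans hXY _; rewrite ge_min lexx.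
Qed.

Context (r M p pbar ahi : R) (lam : R -> nat -> R).
Hypothesis A0 : A !=set0.
Hypothesis hstab : lp_stabilizable nrm f U A r M p lam.
Hypothesis ppb : p <= pbar.
Hypothesis ahi0 : 0 < ahi.
Hypothesis hup : forall x, alpha x <= ahi * distS nrm x A `^ pbar.

Lemma tail x0 : DA nrm f U A x0 -> forall e, 0 < e -> exists K', exists2 delta, 0 < delta &
  forall Y, (exists y, Y y /\ nrm (x0 - y) < delta) ->
    forall L, \sum_(K' <= k < L) P k Y <= e.
Proof.
move=> [pi0 [hpi0 hcvg]] e e0.
case: hstab => [[r0 M1 p0] [hl1 [hl2 [hsum hst]]]].
have M0 : 0 < M by apply: lt_le_trans M1.
have r2 : 0 < r / 2 by rewrite divr_gt0.
have := (cvgrPdist_lt _ _).1 hcvg _ r2.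
rewrite /prop_near1 /nbhs /= /eventually /filter_from /= => -[K _ hK].
have {hK} hK : distS nrm (traj f x0 pi0 K) A < r / 2.
  have := hK K (leqnn K). rewrite /= sub0r normrN => h.
  by apply: le_lt_trans h; exact: ler_norm.
have [Cup Cup0 hCup] := @nrm_upper R n nrm Hn.
have [c c0 hc] := nrm_ball.
have eta0 : 0 < r / 2 / Cup by rewrite divr_gt0.
have [d d0 hd] := @traj_unif R n m f U fc cU U0 [set x0] K (@compact_set1 _ x0) _ eta0.
have rin : r \in `[0, r] by rewrite in_itv /= lexx ltW.
have lr0 j : 0 <= lam r j by have [_ [_ h]] := hl2 r rin; exact: h.
have Mp0 : 0 < M `^ pbar by rewrite powR_gt0.
have e'0 : 0 < e / (ahi * M `^ pbar) by rewrite divr_gt0 // mulr_gt0.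
have [J hJ] := @lam_tail R (lam r) p pbar lr0 p0 ppb hsum _ e'0.
exists (J + K)%N, (c * d); first by rewrite mulr_gt0.
move=> Y [y [Yy hy]] L.
have bxy : ball x0 d y by exact: hc.
set z' := traj f y pi0 K.
have hz' : ball (traj f x0 pi0 K) (r / 2 / Cup) z' by exact: hd.
have Dz' : distS nrm z' A <= r.
  have := @distS_tri R n nrm Hn z' (traj f x0 pi0 K) A A0.
  have := hCup (z' - traj f x0 pi0 K).
  move: hz'; rewrite -ball_normE /= => hz'.
  rewrite -normrN opprB in hz'.
  have : Cup * `|z' - traj f x0 pi0 K| < r / 2.
    by rewrite mulrC -ltr_pdivlMr.
  move=> h1 h2 h3. lra.
have Dz'0 : 0 <= distS nrm z' A by exact: distS_ge0.
have [pi1 [hpi1 hb]] := hst z' Dz'.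
have Din : distS nrm z' A \in `[0, r] by rewrite in_itv /= Dz'0 Dz'.
have hterm i : P (i + K)%N Y <= ahi * M `^ pbar * lam r i `^ pbar.
  have hr : reach f U Y (i + K)%N (traj f z' pi1 i).
    exists y, (@cat_in R m K pi0 pi1); split => //; first exact: cat_inputs.
    by rewrite addnC traj_cat.
  apply: le_trans (Psi_le hr) _. apply: le_trans (hup _) _.
  rewrite -mulrA ler_pM2l // -(powRM _ (ltW M0) (lr0 i)).
  apply: ge0_ler_powR; first by apply: le_trans (ltW p0) ppb.
  - rewrite nnegrE; apply: distS_ge0 => //.
  - by rewrite nnegrE mulr_ge0 // ltW.
  apply: le_trans (hb i) _. rewrite ler_pM2l //.
  have [_ [mono _]] := hl1 i. exact: mono Din rin Dz'.
rewrite big_addn.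
apply: le_trans (ler_sum_nat (fun i _ => hterm i)) _.
rewrite -mulr_sumr. rewrite -ler_pdivlMl ?mulr_gt0 // mulrC. exact: hJ.
Qed.

End Main.

Theorem theorem7 (R : realType) (n m : nat) (nrm : 'rV[R]_n -> R)
  (f : 'rV[R]_n -> 'rV[R]_m -> 'rV[R]_n) (U : set 'rV[R]_m) (A : set 'rV[R]_n)
  (r M p : R) (lam : R -> nat -> R)
  (alpha : 'rV[R]_n -> R) (alo ahi pbar : R) :
  is_norm nrm ->
  continuous (fun xu : 'rV[R]_n * 'rV[R]_m => f xu.1 xu.2) ->
  compact U -> U !=set0 ->
  compact A -> A !=set0 ->
  ctrl_invariant f U A ->
  lp_stabilizable nrm f U A r M p lam ->
  continuous alpha ->
  0 < alo -> 0 < ahi -> p <= pbar ->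
  (forall x, alo * distS nrm x A `^ pbar <= alpha x /\
             alpha x <= ahi * distS nrm x A `^ pbar) ->
  forall X, KD (DA nrm f U A) X ->
  forall N : set (\bar R), nbhs (Vfun alpha f U X) N ->
  exists2 delta : R, 0 < delta &
    forall Y, KD (DA nrm f U A) Y -> dH nrm X Y < delta ->
      N (Vfun alpha f U Y).
Proof.
move=> Hn fc cU U0 cA A0 hinv hstab ac alo0 ahi0 ppb halpha X [cX [X0 [x0 [Xx0 DAx0]]]] N hN.
have a0 x : 0 <= alpha x.
  apply: le_trans (halpha x).1. by apply: mulr_ge0; [exact: ltW | exact: powR_ge0].
have hup x : alpha x <= ahi * distS nrm x A `^ pbar by exact: (halpha x).2.
have Pge0 S k : S !=set0 -> 0 <= Psi alpha (reach f U S k).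
  by move=> S0; exact: (@Psi_ge0 _ _ _ f U alpha U0 a0 S k S0).
have x0X : exists y, X y /\ forall d, 0 < d -> nrm (x0 - y) < d.
  exists x0; split => // d d0. by rewrite subrr (@nrm0 R n nrm Hn).
(* finiteness of V(X) *)
have [K1 [d1 d10 h1]] := @tail _ _ _ _ _ _ _ _ Hn fc cU U0 a0 _ _ _ _ _ _ A0 hstab ppb ahi0 hup x0 DAx0 _ ltr01.
have nx0 d : 0 < d -> nrm (x0 - x0) < d by rewrite subrr (@nrm0 R n nrm Hn).
have [vX [VX _]] := @series_bounds R (fun k => Psi alpha (reach f U X k)) K1 1
  (fun k => Pge0 X k X0) (h1 X (ex_intro _ x0 (conj Xx0 (nx0 _ d10)))).
move: hN; rewrite /Vfun VX => /nbhs_EFin /nbhs_ballP [eps eps0 heps].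
have e0 : 0 < eps / 4 by rewrite divr_gt0.
have [K' [dt dt0 ht]] := @tail _ _ _ _ _ _ _ _ Hn fc cU U0 a0 _ _ _ _ _ _ A0 hstab ppb ahi0 hup x0 DAx0 _ e0.
have e20 : 0 < eps / 4 / (K'%:R + 1) by rewrite divr_gt0 // ltr_wpDl.
have [dc dc0 hc] := @Psi_cont_all _ _ _ _ _ _ _ Hn fc cU U0 ac a0 X K' _ cX X0 e20.
exists (Num.min dt dc); first by rewrite lt_min dt0 dc0.
move=> Y [cY [Y0 _]] hXY.
have hXYt : dH nrm X Y < dt by apply: lt_le_trans hXY _; rewrite ge_min lexx.
have hXYc : dH nrm X Y < dc by apply: lt_le_trans hXY _; rewrite ge_min lexx orbT.
have [hy1 _] := @dH_lt R n nrm Hn X Y _ cX X0 cY Y0 hXYt.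
have [y [Yy hy]] := hy1 x0 Xx0.
have [vY [VY [lY uY]]] := @series_bounds R (fun k => Psi alpha (reach f U Y k)) K' (eps / 4)
  (fun k => Pge0 Y k Y0) (ht Y (ex_intro _ y (conj Yy hy))).
have [vX' [VX' [lX uX]]] := @series_bounds R (fun k => Psi alpha (reach f U X k)) K' (eps / 4)
  (fun k => Pge0 X k X0) (ht X (ex_intro _ x0 (conj Xx0 (nx0 _ dt0)))).
have evX : vX' = vX by move: VX'; rewrite VX => -[->].
rewrite evX in lX uX.
set SX := \sum_(0 <= k < K') Psi alpha (reach f U X k) in lX uX.
set SY := \sum_(0 <= k < K') Psi alpha (reach f U Y k) in lY uY.
have hKe : K'%:R * (eps / 4 / (K'%:R + 1)) <= eps / 4.
  rewrite mulrA ler_pdivrMr ?ltr_wpDl // mulrDr mulr1 mulrC lerDl. exact: ltW.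
have hS1 : SY <= SX + K'%:R * (eps / 4 / (K'%:R + 1)).
  rewrite /SY /SX. apply: le_trans (ler_sum_nat (G := fun k => Psi alpha (reach f U X k) + eps / 4 / (K'%:R + 1)) _) _.
    move=> k /andP [_ kK]. exact: (hc Y cY Y0 hXYc k kK).1.
  by rewrite big_split /= sumr_const_nat subn0 mulr_natl.
have hS2 : SX <= SY + K'%:R * (eps / 4 / (K'%:R + 1)).
  rewrite /SY /SX. apply: le_trans (ler_sum_nat (G := fun k => Psi alpha (reach f U Y k) + eps / 4 / (K'%:R + 1)) _) _.
    move=> k /andP [_ kK]. exact: (hc Y cY Y0 hXYc k kK).2.
  by rewrite big_split /= sumr_const_nat subn0 mulr_natl.
rewrite /Vfun VY. apply: heps. rewrite -ball_normE /= ltr_norml.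
apply/andP; split; lra.
Qed.
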